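(* Let $\xi_1,\xi_2,\dots$ be an IID sequence of Bernoulli random variables with probability of success $p\in[0,1]$, and let $\hat p_n:=\frac1n\sum_{i=1}^n\xi_i$. For each $\delta>0$ and $n\ge1$ let \[ I_n:=\Bigl\{p'\in[0,1]:\ |p'-\hat p_{\lfloor\!\lfloor n\rfloor\!\rfloor}|<\sqrt{\frac{2\ln\log_2\lfloor\!\lfloor n\rfloor\!\rfloor+\ln\frac{3.3}{\delta}}{2\lfloor\!\lfloor n\rfloor\!\rfloor}}\Bigr\}, \] with the convention $\ln\log_2 1:=\infty$ (so $I_1=[0,1]$). Then $\mathbb{P}(\forall n\ge1:\ p\in I_n)\ge1-\delta$.
   Context: For an integer $n\ge2$, $\lfloor\!\lfloor n\rfloor\!\rfloor$ denotes the largest integer of the form $2^k$, $k\in\{1,2,\dots\}$, with $2^k\le n$; for $n<2$, $\lfloor\!\lfloor n\rfloor\!\rfloor:=1$. $\log_2$ is the binary logarithm. *)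

(* Defs.v *)
From HB Require Import structures.
From mathcomp Require Import all_boot all_order all_algebra.
From mathcomp Require Import all_classical all_reals all_analysis.
Set Implicit Arguments. Unset Strict Implicit. Unset Printing Implicit Defensive.
Import Order.TTheory GRing.Theory Num.Theory.
Local Open Scope classical_set_scope.
Local Open Scope ring_scope.

Definition pow2floor (n : nat) : nat :=
  if (n < 2)%N then 1%N else (2 ^ trunc_log 2 n)%N.

Definition mutually_independent {R : realType} {d : measure_display}
  {T : measurableType d} (P : probability T R) (X : nat -> T -> R) : Prop :=
  forall (J : seq nat) (B : nat -> set R), uniq J ->
    (forall j, measurable (B j)) ->
    P (\bigcap_(j in [set j | j \in J]) (X j @^-1` B j)) =
    (\prod_(j <- J) P (X j @^-1` B j))%E.

Definition phat {R : realType} {T : Type} (xi : nat -> T -> R) (n : nat) (w : T) : R :=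
  (\sum_(1 <= i < n.+1) xi i w) / n%:R.

(* the confidence set I_n(w); convention ln log2 1 = +oo, so I_1 = [0,1] *)
Definition conf_set {R : realType} {T : Type} (xi : nat -> T -> R) (delta : R)
    (n : nat) (w : T) : set R :=
  let N := pow2floor n in
  [set p' | 0 <= p' <= 1 /\
     (N = 1%N \/
      `|p' - phat xi N w| <
        Num.sqrt ((2 * ln (ln (N%:R) / ln 2) + ln ((33 / 10) / delta)) / (2 * N%:R)))].

(* Main.v *)
Require Import Defs.
From HB Require Import structures.
From mathcomp Require Import all_boot all_order all_algebra.
From mathcomp Require Import all_classical all_reals all_analysis.
From mathcomp Require Import ring lra zify.
From Stdlib Require Import Lia.
Import Order.TTheory GRing.Theory Num.Theory numFieldNormedType.Exports.
Local Open Scope classical_set_scope.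
Local Open Scope ring_scope.

Section H.
Context {R : realType}.

Lemma nincr_deriv (f df : R -> R) (a : R) :
  (forall x : R, is_derive x (1:R) f (df x)) -> (forall x, a <= x -> df x <= 0) ->
  forall x y, a <= x -> x <= y -> f y <= f x.
Proof.
move=> hd hneg u v au uv.
apply: (@ler0_derive1_nincr R f u v) => //.
- move=> z; rewrite in_itv /= => /andP[xz _].
  rewrite derive1E; case: (hd z) => _ ->; apply: hneg; exact: le_trans au (ltW xz).
- have cf : continuous f.
    move=> z; apply/differentiable_continuous/derivable1_diffP; by case: (hd z).
  by apply: continuous_subspaceT.
Qed.

Lemma hoeffding_lemma {p t : R} : 0 <= p <= 1 -> 0 <= t ->
  1 - p + p * expR t <= expR (p * t + t ^+ 2 / 8).
Proof.
move=> /andP[p0 p1] t0.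
pose L := fun s : R => 1 - p + p * expR s.
have Lpos s : 0 < L s.
  rewrite /L; have := expR_gt0 s => es; nra.
have dE s : is_derive s (1:R) (fun z => p * expR z) (p * expR s).
  exact: (is_deriveZ p (is_derive_expR s)).
have dL s : is_derive s (1:R) L (p * expR s).
  have := is_deriveD (is_derive_cst (1 - p) s 1) (dE s).
  by rewrite add0r.
have dLi s : is_derive s (1:R) (fun z => (L z)^-1) (- (L s) ^- 2 *: (p * expR s)).
  exact: is_deriveV (lt0r_neq0 (Lpos s)) (dL s).
pose K := fun z => (L z)^-1 * (p * expR z) - 4^-1 * z.
have dK s : is_derive s (1:R) K
   ((L s)^-1 *: (p * expR s) + (p * expR s) *: (- (L s) ^- 2 *: (p * expR s)) - 4^-1 *: 1).
  exact: (is_deriveB (is_deriveM (dLi s) (dE s)) (is_deriveZ (4^-1) (is_derive_id s 1))).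
have Kle s : 0 <= s -> K s <= p.
  move=> s0.
  have L0 : L 0 = 1 by rewrite /L expR0; lra.
  have -> : p = K 0 by rewrite /K L0 invr1 expR0 mul1r mulr1 mulr0 subr0.
  apply: (@nincr_deriv K _ 0 dK) => // z _.
  set e := p * expR z; set l := L z.
  have l0 : l != 0 by exact: lt0r_neq0 (Lpos z).
  have le : l = 1 - p + e by [].
  have -> : l^-1 *: e + e *: (- l ^- 2 *: e) - 4^-1 *: (1:R) = 
     - ((l - 2 * e) / (2 * l)) ^+ 2.
    rewrite /GRing.scale /=. field. done.
  by rewrite oppr_le0 sqr_ge0.
pose G := fun z => ln (L z) - (p * z + 8^-1 * (z ^+ 2)).
have dG s : is_derive s (1:R) G ((L s)^-1 * (p * expR s) - (p *: 1 + 8^-1 *: ((2%:R * s ^+ 1) *: 1))).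
  apply: (is_deriveB (is_derive1_comp (is_derive1_ln (Lpos s)) (dL s))).
  exact: (is_deriveD (is_deriveZ p (is_derive_id s 1)) (is_deriveZ (8^-1) (is_deriveX 2 (is_derive_id s 1)))).
have Gle : G t <= G 0.
  apply: (@nincr_deriv G _ 0 dG) => // z z0.
  have := Kle z z0; rewrite /K /GRing.scale /= => h.
  rewrite expr1; lra.
have G0 : G 0 = 0.
  by rewrite /G /L expR0 mulr1 subrK ln1 mulr0 expr0n /= mulr0 addr0 subr0.
have : ln (L t) <= p * t + t ^+ 2 / 8.
  move: Gle; rewrite G0 /G subr_le0. by rewrite [_ / 8]mulrC.
rewrite -ler_expR lnK //; exact: Lpos.
Qed.

Definition wt {N} (q : R) (x : bool) (b : {ffun 'I_N -> bool}) : R :=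
  \prod_(i < N) (if b i == x then q else 1 - q).
Definition cnt {N} (x : bool) (b : {ffun 'I_N -> bool}) : R :=
  \sum_(i < N) ((b i == x) : nat)%:R.

Lemma wt_ge0 {N q} x (b : {ffun 'I_N -> bool}) : 0 <= q <= 1 -> 0 <= @wt N q x b.
Proof.
move=> /andP[q0 q1]; apply: prodr_ge0 => i _; case: ifP => _ //; lra.
Qed.

Lemma chernoff_tail (N : nat) (q e : R) (x : bool) : (0 < N)%N -> 0 <= q <= 1 -> 0 <= e ->
  \sum_(b : {ffun 'I_N -> bool} | q + e <= cnt x b / N%:R) wt q x b
    <= expR (- (2 * N%:R * e ^+ 2)).
Proof.
move=> N0 hq e0.
have Npos : 0 < N%:R :> R by rewrite ltr0n.
set t := 4 * e.
have t0 : 0 <= t by rewrite /t; lra.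
set c := t * (N%:R * (q + e)).
have step1 : \sum_(b : {ffun 'I_N -> bool} | q + e <= cnt x b / N%:R) wt q x b
    <= \sum_(b : {ffun 'I_N -> bool}) wt q x b * expR (t * cnt x b - c).
  rewrite big_mkcond /=; apply: ler_sum => b _.
  case: ifP => hb; last by apply: mulr_ge0; [exact: wt_ge0|exact: expR_ge0].
  rewrite -{1}[wt q x b]mulr1; apply: ler_wpM2l; first exact: wt_ge0.
  rewrite -expR0 ler_expR /c subr_ge0; apply: ler_wpM2l => //.
  by rewrite -ler_pdivlMl // mulrC.
have step2 : \sum_(b : {ffun 'I_N -> bool}) wt q x b * expR (t * cnt x b - c)
   = expR (- c) * \sum_(b : {ffun 'I_N -> bool})
        \prod_(i < N) (fun (i : 'I_N) (j : bool) => if j == x then q * expR t else 1 - q) i (b i).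
  rewrite mulr_sumr; apply: eq_bigr => b _.
  rewrite addrC expRD mulrCA; congr (_ * _).
  rewrite /cnt mulr_sumr expR_sum /wt -big_split /=; apply: eq_bigr => i _.
  by case: (b i == x); rewrite /= ?mulr1 ?mulr0 ?expR0 ?mulr1.
have step3 : \sum_(b : {ffun 'I_N -> bool})
        \prod_(i < N) (fun (i : 'I_N) (j : bool) => if j == x then q * expR t else 1 - q) i (b i)
   = (1 - q + q * expR t) ^+ N.
  rewrite -(@bigA_distr_bigA R 0 1 *%R +%R _ _ (fun (i : 'I_N) (j : bool) => if j == x then q * expR t else 1 - q)).
  rewrite (eq_bigr (fun _ => 1 - q + q * expR t)); last first.
    by move=> i _; rewrite big_bool; case: (x) => /=; rewrite addrC.
  by rewrite prodr_const card_ord.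
apply: (le_trans step1); rewrite step2 step3.
have hl := hoeffding_lemma hq t0.
have : (1 - q + q * expR t) ^+ N <= expR (q * t + t ^+ 2 / 8) ^+ N.
  apply: lerXn2r => //; rewrite ?nnegrE ?expR_ge0 //.
  case/andP: hq => q0 q1; have := expR_ge0 t; nra.
rewrite -expRM_natl => h.
apply: le_trans (ler_wpM2l (expR_ge0 _) h) _.
rewrite -expRD; rewrite ler_expR /c /t; nra.
Qed.


Lemma cnt_false N (b : {ffun 'I_N -> bool}) : cnt false b = N%:R - cnt true b.
Proof.
have -> : N%:R = \sum_(i < N) (1 : R) by rewrite sumr_const card_ord.
rewrite /cnt -sumrB.
by apply: eq_bigr => i _; case: (b i) => /=; rewrite ?subrr ?subr0.
Qed.

Lemma wt_false N p (b : {ffun 'I_N -> bool}) : wt (1 - p) false b = wt p true b.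
Proof.
rewrite /wt; apply: eq_bigr => i _; case: (b i) => //=; by rewrite opprB addrC subrK.
Qed.

Lemma two_sided (N : nat) (p e : R) : (0 < N)%N -> 0 <= p <= 1 -> 0 <= e ->
  \sum_(b : {ffun 'I_N -> bool} | e <= `|p - cnt true b / N%:R|) wt p true b
    <= 2 * expR (- (2 * N%:R * e ^+ 2)).
Proof.
move=> N0 hp e0.
have Npos : 0 < N%:R :> R by rewrite ltr0n.
have hq : 0 <= 1 - p <= 1 by case/andP: hp => ? ?; apply/andP; split; lra.
apply: (@le_trans _ _ (\sum_(b : {ffun 'I_N -> bool} | p + e <= cnt true b / N%:R) wt p true b
   + \sum_(b : {ffun 'I_N -> bool} | (1 - p) + e <= cnt false b / N%:R) wt (1 - p) false b)).
  rewrite [X in _ <= X + _]big_mkcond [X in _ <= _ + X]big_mkcond -big_split /=.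
  rewrite big_mkcond; apply: ler_sum => b _.
  rewrite wt_false cnt_false mulrBl divff ?lt0r_neq0 //.
  have w0 := wt_ge0 true b hp.
  case: ifP => h1; case: ifP => h2; case: ifP => h3 //; try lra.
  move: h1 h2 h3; rewrite ler_normr => /orP[h|h] /negbT h2 /negbT h3.
    by move: h3; rewrite -ltNge; lra.
  by move: h2; rewrite -ltNge; lra.
rewrite mulr2n mulrDl mul1r; apply: lerD; exact: chernoff_tail.
Qed.

End H.

Lemma pow2floor_pow k : pow2floor (2 ^ k.+1) = (2 ^ k.+1)%N.
Proof.
rewrite /pow2floor trunc_expnK // ifF //.
by apply/negbTE; rewrite -leqNgt expnS leq_pmulr // expn_gt0.
Qed.

Lemma pow2floor_cases n : (1 <= n)%N -> pow2floor n = 1%N \/ exists k, pow2floor n = (2 ^ k.+1)%N.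
Proof.
move=> n1; rewrite /pow2floor; case: ifP => hn; first by left.
right; exists (trunc_log 2 n).-1; rewrite prednK //.
by rewrite trunc_log_gt0 /=; move/negbT: hn; rewrite -leqNgt.
Qed.

Lemma basel_bound {R : realType} n : \sum_(k < n) ((k.+1)%:R ^+ 2)^-1 <= (33 / 20 : R).
Proof.
pose S n : R := \sum_(k < n) ((k.+1)%:R ^+ 2)^-1.
have Sstep m : S m.+1 = S m + ((m.+1)%:R ^+ 2)^-1 by rewrite /S big_ord_recr.
have Smono m k : S m <= S (m + k)%N.
  elim: k => [|k IH]; first by rewrite /S addn0.
  rewrite addnS Sstep; apply: le_trans IH _; rewrite lerDl invr_ge0; exact: sqr_ge0.
have key m : S (m + 5)%N + 2 / (2 * (m + 5)%:R + 1) <= 33 / 20.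
  elim: m => [|m IH].
    rewrite /S !big_ord_recr big_ord0 /= add0n.
    have a1 : (1:R) ^- 2 = 1 by rewrite expr1n invr1.
    have a2 : (2:R) ^- 2 = 1/4 by field.
    have a3 : (3:R) ^- 2 = 1/9 by field.
    have a4 : (4:R) ^- 2 = 1/16 by field.
    have a5 : (5:R) ^- 2 = 1/25 by field.
    have a6 : (2:R) / (2 * 5%:R + 1) = 2/11 by field.
    rewrite a1 a2 a3 a4 a5 a6.
    lra.
  apply: le_trans IH; rewrite addSn Sstep -addrA lerD2l.
  set x : R := (m + 5)%:R.
  have x0 : 0 <= x by rewrite /x ler0n.
  rewrite -natr1 -/x.
  have -> : 2 / (2 * x + 1) = ((x + 1) ^+ 2)^-1 + 2 / (2 * (x + 1) + 1)
            + ((x + 1) ^+ 2 * (2 * x + 1) * (2 * x + 3))^-1.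
    field; have m0 : (0:R) <= m%:R by rewrite ler0n.
    by apply/and3P; split; apply: lt0r_neq0; lra.
  rewrite lerDl; apply: ltW; rewrite invr_gt0.
  by apply: mulr_gt0; [apply: mulr_gt0; [apply: exprn_gt0|]|]; lra.
apply: le_trans (Smono n 5) _; apply: le_trans (key n); rewrite lerDl.
apply: divr_ge0 => //; rewrite addr_ge0 // mulr_ge0 //.
Qed.

Section Prob.
Context (R : realType) (d : measure_display) (T : measurableType d) (P : probability T R).

Lemma fin_subadd {I : Type} (s : seq I) (Q : pred I) (F : I -> set T) :
  (forall i, measurable (F i)) ->
  (P (\big[setU/set0]_(i <- s | Q i) F i) <= \sum_(i <- s | Q i) P (F i))%E.
Proof.
move=> mF; elim: s => [|i s IH]; first by rewrite !big_nil measure0.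
rewrite !big_cons; case: ifP => _ //.
apply: le_trans (measureU2 _ _ _) _; first exact: mF.
  exact: bigsetU_measurable.
exact: leeD.
Qed.

Lemma mphat (xi : nat -> T -> R) (p : R) N :
  (forall i, measurable_fun setT (xi i)) ->
  measurable_fun setT (fun w => `|p - phat xi N w|).
Proof.
move=> hxi.
apply: (measurableT_comp (@measurable_realfun.normr_measurable R setT)).
apply: measurable_realfun.measurable_funB; first exact: measurable_cst.
rewrite /phat; apply: measurable_realfun.measurable_funM; last exact: measurable_cst.
exact: measurable_sum.
Qed.


Lemma mbad (xi : nat -> T -> R) (p e : R) N :
  (forall i, measurable_fun setT (xi i)) ->
  measurable [set w | (e <= `|p - phat xi N w|)%R].
Proof.
move=> hxi.
have -> : [set w | (e <= `|p - phat xi N w|)%R] =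
    (fun w => `|p - phat xi N w|) @^-1` `[e, +oo[.
  by apply/seteqP; split => w /=; rewrite in_itv /= andbT.
have := mphat xi p N hxi measurableT _ (measurable_itv `[e, +oo[).
by rewrite setTI.
Qed.

Lemma bad_bound (xi : nat -> T -> R) (p e : R) (n : nat) :
  0 <= p <= 1 -> (forall i, measurable_fun setT (xi i)) ->
  (forall i, P [set w | xi i w = 1] = p%:E) ->
  (forall i, P [set w | xi i w = 0] = (1 - p)%:E) ->
  mutually_independent P xi -> 0 <= e ->
  (P [set w | (e <= `|p - phat xi n.+1 w|)%R] <= (2 * expR (- (2 * n.+1%:R * e ^+ 2)))%:E)%E.
Proof.
move=> hp hxi h1 h0 hind e0.
set N := n.+1.
have mpre j (B : set R) : measurable B -> measurable (xi j @^-1` B).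
  by move=> mB; have := hxi j measurableT B mB; rewrite setTI.
pose v (b : {ffun 'I_N -> bool}) (j : nat) : R := (b (inord j.-1) : nat)%:R.
pose A b := \bigcap_(j in [set j | j \in iota 1 N]) (xi j @^-1` [set v b j]).
have mA b : measurable (A b).
  apply: bigcap_measurableType => j _; apply: mpre; exact: measurable_set1.
have PA b : P (A b) = (wt p true b)%:E.
  rewrite /A hind; [| exact: iota_uniq | by move=> j; exact: measurable_set1].
  rewrite (_ : iota 1 N = map (addn 1) (iota 0 N)); last by rewrite -iotaDl.
  rewrite big_map -[iota 0 N]/(index_iota 0 N) big_mkord /wt -prodEFin.
  apply: eq_bigr => i _; rewrite /v /= inord_val.
  case: (b i) => /=.
    rewrite -(h1 (1 + i)%N); congr (P _).
  rewrite -(h0 (1 + i)%N); congr (P _).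
pose Zj j := [set w | xi j w <> 0 /\ xi j w <> 1].
have mZj j : measurable (Zj j).
  have -> : Zj j = ~` (xi j @^-1` ([set 0] `|` [set 1])).
    apply/seteqP; split => w /=.
      by move=> [a b] [c|c].
    by move=> h; split => c; apply: h; [left|right].
  by apply: measurableC; apply: mpre; apply: measurableU; exact: measurable_set1.
have PZj j : P (Zj j) = 0%E.
  have -> : Zj j = ~` (xi j @^-1` [set 0] `|` xi j @^-1` [set 1]).
    apply/seteqP; split => w /=.
      by move=> [a b] [c|c].
    by move=> h; split => c; apply: h; [left|right].
  rewrite probability_setC; last by apply: measurableU; apply: mpre; exact: measurable_set1.
  rewrite measureU; [| by apply: mpre; exact: measurable_set1 | by apply: mpre; exact: measurable_set1 |].
    by rewrite [X in (_ - (X + _))%E](h0 j) [X in (_ - (_ + X))%E](h1 j) -EFinD subrK subrr.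
  by apply/seteqP; split => w //= [-> ] /eqP; rewrite eq_sym oner_eq0.
pose Z := \bigcup_j Zj j.
have mZ : measurable Z by exact: bigcupT_measurable.
have PZ : P Z = 0%E.
  apply/eqP; rewrite -measure_le0.
  apply: le_trans (measure_sigma_subadditive P mZj mZ (fun w hw => hw)) _.
  by rewrite eseries0 // => i _ _; exact: PZj.
pose D (b : {ffun 'I_N -> bool}) := e <= `|p - cnt true b / N%:R|.
pose U := \big[setU/set0]_(b | D b) A b.
have mU : measurable U by apply: bigsetU_measurable => b _; exact: mA.
have sub : [set w | (e <= `|p - phat xi N w|)%R] `<=` Z `|` U.
  move=> w hw; case: (pselect (Z w)) => [hz|hz]; [by left | right].
  have h01 j : xi j w = 0 \/ xi j w = 1.
    case: (pselect (xi j w = 0)) => [|a]; [by left|].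
    case: (pselect (xi j w = 1)) => [|c]; [by right|].
    by exfalso; apply: hz; exists j.
  pose b := [ffun i : 'I_N => xi i.+1 w == 1].
  have hv j : (0 < j <= N)%N -> xi j w = v b j.
    move=> /andP[j0 jN]; rewrite /v ffunE inordK; last by rewrite prednK.
    rewrite prednK //; case: (h01 j) => ->; by [rewrite eq_sym oner_eq0 | rewrite eqxx].
  have Ab : A b w.
    move=> j /= hj; apply: hv; move: hj; rewrite -[_ :: _]/(iota 1 N) mem_iota /N; lia.
  have Db : D b.
    suff h : phat xi N w = cnt true b / N%:R by rewrite /D -h.
    rewrite /phat /cnt; congr (_ / _).
    rewrite big_add1 /= big_mkord; apply: eq_bigr => i _.
    have h10 : ((0:R) == 1) = false by rewrite eq_sym oner_eq0.
    by rewrite ffunE /=; case: (h01 i.+1) => ->; rewrite ?h10 ?eqxx.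
  by rewrite /U (bigD1 b) //=; left.
have mBad : measurable [set w | (e <= `|p - phat xi N w|)%R].
  have -> : [set w | (e <= `|p - phat xi N w|)%R] =
      (fun w => `|p - phat xi N w|) @^-1` `[e, +oo[.
    by apply/seteqP; split => w /=; rewrite in_itv /= andbT.
  have := mphat xi p N hxi measurableT _ (measurable_itv `[e, +oo[).
  by rewrite setTI.
apply: le_trans (le_measure _ _ _ sub) _.
- by rewrite inE.
- by rewrite inE; apply: measurableU.
apply: le_trans (measureU2 _ _ _) _ => //.
change (P Z + P U <= (2 * expR (- (2 * N%:R * e ^+ 2)))%:E)%E.
rewrite PZ add0e.
apply: le_trans (fin_subadd _ _ _ mA) _.
under eq_bigr do rewrite PA.
rewrite sumEFin lee_fin; exact: two_sided.
Qed.

End Prob.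

Theorem proposition2 (R : realType) (d : measure_display) (T : measurableType d)
  (P : probability T R) (xi : nat -> T -> R) (p delta : R) :
  0 <= p <= 1 ->
  (forall i, measurable_fun setT (xi i)) ->
  (forall i, P [set w | xi i w = 1] = p%:E) ->
  (forall i, P [set w | xi i w = 0] = (1 - p)%:E) ->
  mutually_independent P xi ->
  0 < delta ->
  ((1 - delta)%:E <= P [set w | forall n, (1 <= n)%N -> conf_set xi delta n w p])%E.
Proof.
move=> hp hxi h1 h0 hind hd.
case: (lerP delta 1) => hd1; last first.
  apply: le_trans (measure_ge0 _ _); rewrite lee_fin; lra.
pose N k := (2 ^ k.+1)%N.
pose eps k : R := Num.sqrt ((2 * ln (ln ((N k)%:R) / ln 2) + ln ((33 / 10) / delta)) / (2 * (N k)%:R)).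
pose Bad k := [set w | (eps k <= `|p - phat xi (N k) w|)%R].
have Good_eq : [set w | forall n, (1 <= n)%N -> conf_set xi delta n w p] = ~` \bigcup_k Bad k.
  apply/seteqP; split => w /=.
  - move=> h [k _ hb]; have := h (N k) (expn_gt0 _ _).
    rewrite /conf_set /= pow2floor_pow => -[_ [hN|hlt]].
      by move: hN; rewrite expnS => /eqP; rewrite muln_eq1.
    by have := lt_le_trans hlt hb; rewrite ltxx.
  - move=> h n n1; rewrite /conf_set /=; split => //.
    case: (pow2floor_cases n n1) => [->|[k ->]]; [by left | right].
    rewrite ltNge; apply/negP => hb; apply: h; exists k => //.
have mBad k : measurable (Bad k) by exact: mbad.
have mU : measurable (\bigcup_k Bad k) by exact: bigcupT_measurable.
rewrite Good_eq probability_setC //.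
have bk k : (P (Bad k) <= ((20 / 33 * delta) / ((k.+1)%:R ^+ 2))%:E)%E.
  have hN : N k = ((N k).-1).+1 by rewrite prednK // expn_gt0.
  have e0 : 0 <= eps k by apply: sqrtr_ge0.
  have := @bad_bound R d T P xi p (eps k) (N k).-1 hp hxi h1 h0 hind e0.
  rewrite -hN => /le_trans; apply; rewrite lee_fin le_eqVlt; apply/orP; left; apply/eqP.
  have ln2 : 0 < ln 2 :> R by rewrite ln_gt0 // ltr1n.
  have Nr : 0 < (N k)%:R :> R by rewrite ltr0n expn_gt0.
  have hlnN : ln ((N k)%:R) / ln 2 = (k.+1)%:R :> R.
    rewrite /N natrX lnXn // -[ln _ *+ _]mulr_natr mulrAC divff ?mul1r //; apply: lt0r_neq0; rewrite ln_gt0 // ltr1n //.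
  set m : R := (k.+1)%:R.
  have m1 : 1 <= m by rewrite /m ler1n.
  set a : R := 33 / 10 / delta.
  have a1 : 1 <= a.
    rewrite /a ler_pdivlMr //; lra.
  have L0 : 0 <= ln m by exact: ln_ge0.
  have A0 : 0 <= ln a by exact: ln_ge0.
  have heps : eps k ^+ 2 = (2 * ln m + ln a) / (2 * (N k)%:R).
    rewrite /eps hlnN -/m -/a sqr_sqrtr //.
    by apply: divr_ge0; [lra | apply: mulr_ge0 => //; exact: ltW].
  rewrite heps.
  have -> : 2 * (N k)%:R * ((2 * ln m + ln a) / (2 * (N k)%:R)) = 2 * ln m + ln a.
    by field; apply: lt0r_neq0.
  have m0 : 0 < m by lra.
  have a0 : 0 < a by lra.
  have e2 : expR (2 * ln m) = m ^+ 2 by rewrite [2 * ln m]mulr_natl mulr2n expRD lnK // posrE.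
  rewrite opprD expRD !expRN e2 lnK; last by rewrite posrE.
  rewrite /a; field.
  have k0 : (0:R) <= k%:R by rewrite ler0n.
  by apply/andP; split; apply: lt0r_neq0; lra.
have hU : (P (\bigcup_k Bad k) <= delta%:E)%E.
  apply: le_trans (measure_sigma_subadditive P mBad mU (fun w hw => hw)) _.
  apply: le_trans (lee_nneseries _ (fun k _ => bk k)) _.
    by move=> i _ _; exact: measure_ge0.
  apply: lime_le.
    by apply: is_cvg_nneseries => i _ _; rewrite lee_fin; apply: divr_ge0; [lra|exact: sqr_ge0].
  apply: nearW => n.
  rewrite sumEFin lee_fin big_mkord -mulr_sumr.
  have := @basel_bound R n.
  have : 0 <= 20 / 33 * delta by lra.
  set S := \sum_(_ < _) _ => c0 hS.
  apply: le_trans (ler_wpM2l c0 hS) _.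
  by rewrite le_eqVlt; apply/orP; left; apply/eqP; field.
have [r hr] : exists r, P (\bigcup_k Bad k) = r%:E.
  exists (fine (P (\bigcup_k Bad k))); rewrite fineK // ge0_fin_numE //.
  by apply: le_lt_trans (probability_le1 _ mU) _; rewrite ltry.
rewrite hr -EFinB lee_fin; move: hU; rewrite hr lee_fin; lra.
Qed.
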